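(* Let $m$ be a positive integer and let $Q_1,\dots,Q_m$ be the partition of $\{0,1,\dots,m+1\}^3$ given by $(x,y,z)\in Q_i \iff f(x,y,z)=i$, where $f$ is defined below. Then for every $1\le i<j\le m$ and every unit vector $v\in\mathbb{Z}^3$ parallel to a coordinate axis, the sets $Q_i+(m+2)v$ and $Q_j$ are adjacent (i.e. the partition is externally adjacent).
   Context: Define $f:\{0,\dots,m+1\}^3\to\{1,\dots,m\}$ by: $f(x,y,z)=y$ if $0\le x\le m$, $1\le y\le m$, $z=0$; $f(x,y,z)=x$ if $1\le x\le m$, $0\le y\le m$, $z=m+1$; $f(x,y,z)=y$ if $x=0$, $1\le y\le m$, $1\le z\le m$; $f(x,y,z)=x$ if $1\le x\le m$, $y=0$, $1\le z\le m$; $f(x,y,z)=z$ if $1\le x\le m+1$, $1\le y\le m+1$, $1\le z\le m$; and $f(x,y,z)=1$ for all remaining points. Two disjoint sets $P,Q\subset\mathbb{Z}^3$ are adjacent if there exist $p\in P$, $q\in Q$ and a unit vector $v$ parallel to a coordinate axis with $p+v=q$. *)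

(* Defs.v *)
From Stdlib Require Import ZArith Lia Bool.
Open Scope Z_scope. Open Scope bool_scope.

Definition pt := (Z * Z * Z)%type.

Definition padd (p q : pt) : pt :=
  let '(a, b, c) := p in let '(d, e, g) := q in (a + d, b + e, c + g).

Definition pscale (k : Z) (p : pt) : pt :=
  let '(a, b, c) := p in (k * a, k * b, k * c).

Definition unit_axis (v : pt) : Prop :=
  v = (1, 0, 0) \/ v = (-1, 0, 0) \/ v = (0, 1, 0) \/ v = (0, -1, 0) \/
  v = (0, 0, 1) \/ v = (0, 0, -1).

Definition in_box (m : Z) (p : pt) : Prop :=
  let '(x, y, z) := p in
  0 <= x <= m + 1 /\ 0 <= y <= m + 1 /\ 0 <= z <= m + 1.

(* The function f of the paper (the five case domains are pairwise disjoint). *)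
Definition f (m : Z) (p : pt) : Z :=
  let '(x, y, z) := p in
  if (0 <=? x) && (x <=? m) && (1 <=? y) && (y <=? m) && (z =? 0) then y
  else if (1 <=? x) && (x <=? m) && (0 <=? y) && (y <=? m) && (z =? m + 1) then x
  else if (x =? 0) && (1 <=? y) && (y <=? m) && (1 <=? z) && (z <=? m) then y
  else if (1 <=? x) && (x <=? m) && (y =? 0) && (1 <=? z) && (z <=? m) then x
  else if (1 <=? x) && (x <=? m + 1) && (1 <=? y) && (y <=? m + 1)
          && (1 <=? z) && (z <=? m) then z
  else 1.

Definition Q (m i : Z) (p : pt) : Prop := in_box m p /\ f m p = i.

Definition translate (P : pt -> Prop) (w : pt) (p : pt) : Prop :=
  exists q, P q /\ p = padd q w.

Definition adjacent (P R : pt -> Prop) : Prop :=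
  (forall p, P p -> R p -> False) /\
  exists p q v, P p /\ R q /\ unit_axis v /\ padd p v = q.

(* Main.v *)
Require Import Defs.
From Stdlib Require Import ZArith Lia Bool.
Open Scope Z_scope.

Ltac decb :=
  repeat match goal with
  | |- context[?a <=? ?b] =>
      first [ rewrite (proj2 (Z.leb_le a b)) by lia
            | rewrite (proj2 (Z.leb_gt a b)) by lia ]
  | |- context[?a =? ?b] =>
      first [ rewrite (proj2 (Z.eqb_eq a b)) by lia
            | rewrite (proj2 (Z.eqb_neq a b)) by lia ]
  end; cbn.

Ltac fin s q0 d :=
  split;
  [ intros [[a b] c] [[[x y] z] [[Hb Hf] He]] [Hb2 _];
    cbn in *; inversion He; subst; lia
  | eexists; exists q0; exists d; split;
    [ exists s; split; [split; [cbn; lia | unfold f; decb; lia] | reflexivity]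
    | split; [split; [cbn; lia | unfold f; decb; lia] |
      split; [unfold unit_axis; tauto | cbn; f_equal; [f_equal|]; lia]]]].

Theorem lemma2p2 (m : Z) (hm : 1 <= m) :
  forall i j : Z, 1 <= i -> i < j -> j <= m ->
  forall v : pt, unit_axis v ->
    adjacent (translate (Q m i) (pscale (m + 2) v)) (Q m j).
Proof.
  intros i j Hi Hij Hj v Hv.
  unfold adjacent, translate, Q, in_box.
  destruct Hv as [H|[H|[H|[H|[H|H]]]]]; subst v.
  - fin (0,i,j) (m+1, i, j) (-1,0,0).
  - fin (m+1,j,i) (0, j, i) (1,0,0).
  - fin (i,0,j) (i, m+1, j) (0,-1,0).
  - fin (j,m+1,i) (j, 0, i) (0,1,0).
  - fin (j,i,0) (j, i, m+1) (0,0,-1).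
  - fin (i,j,m+1) (i, j, 0) (0,0,1).
Qed.
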